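(* Let $n\ge 2$ and let $\rho\colon F_n\rtimes B_n\to\mathbf{C}^*$ be a one-dimensional representation, extended linearly to a ring homomorphism $\mathbf{Z}[F_n\rtimes B_n]\to\mathbf{C}$. Let $\rho^+\colon B_n\to\mathrm{GL}(n,\mathbf{C})$ be defined by applying $\rho$ to each entry of the matrix $\phi(\beta)$. Then there exist $s,t\in\mathbf{C}^*$ with $\rho(\sigma_i)=s$ for all $i$ and $\rho(g_j)=t$ for all $j$, and for $i=1,\dots,n-1$ $$\rho^+(\sigma_i)=s\begin{bmatrix} I_{i-1}&&\\ &\begin{matrix}0&t\\1&1-t\end{matrix}&\\ &&I_{n-i-1}\end{bmatrix}.$$ That is, $\rho^+$ is the unreduced Burau representation specialized at $t$ and rescaled by the factor $s$.
   Context: The braid group $B_n$ has generators $\sigma_1,\dots,\sigma_{n-1}$ with relations $\sigma_i\sigma_j=\sigma_j\sigma_i$ for $|i-j|>1$ and $\sigma_i\sigma_j\sigma_i=\sigma_j\sigma_i\sigma_j$ for $|i-j|=1$. Let $F_n$ be the free group on $g_1,\dots,g_n$. The semidirect product $F_n\rtimes B_n$ is the group generated by $F_n$ and $B_n$ subject to the additional relations $g_{i+1}\sigma_i=\sigma_i g_i$, $g_i\sigma_i=\sigma_i g_i g_{i+1}g_i^{-1}$, and $g_j\sigma_i=\sigma_i g_j$ for $j\notin\{i,i+1\}$. Let $\mathbf{Z}[F_n\rtimes B_n]$ be its (noncommutative) group ring. For $i=1,\dots,n-1$ let $R_i=\begin{bmatrix}0&g_i\\1&1-g_i\end{bmatrix}$.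 Let $\phi$ be the homomorphism from $B_n$ to the group of invertible $n\times n$ matrices over $\mathbf{Z}[F_n\rtimes B_n]$ (usual matrix multiplication) given by $\phi(\sigma_i)=\sigma_i\cdot\mathrm{diag}(I_{i-1},R_i,I_{n-i-1})$, where the scalar $\sigma_i$ multiplies every entry on the left. *)

(* Defs.v *)
From HB Require Import structures.
From mathcomp Require Import all_boot all_order all_algebra.
From mathcomp Require Import complex.
From mathcomp Require Import Rstruct.
Set Implicit Arguments. Unset Strict Implicit. Unset Printing Implicit Defensive.
Import Order.TTheory GRing.Theory Num.Theory.
Local Open Scope ring_scope.

Definition C : Type := (Rdefinitions.R)[i].

(** Generators of F_n ⋊ B_n (1-based indices as in the paper):
    [Sg i] is sigma_i (1 <= i <= n-1), [Gg j] is g_j (1 <= j <= n). *)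
Inductive gen := Sg of nat | Gg of nat.

Definition valid_gen (n : nat) (x : gen) : bool :=
  match x with
  | Sg i => (1 <= i <= n.-1)%N
  | Gg j => (1 <= j <= n)%N
  end.

(** Words in the generators and their inverses ([true] = inverse letter). *)
Definition word := seq (gen * bool).
Definition L (x : gen) : gen * bool := (x, false).
Definition Linv (x : gen) : gen * bool := (x, true).

(** The defining relations of F_n ⋊ B_n (F_n is free, so it contributes no
    relations), as pairs of words u = v. *)
Inductive is_rel (n : nat) : word -> word -> Prop :=
  | rel_far i j : (1 <= i <= n.-1)%N -> (1 <= j <= n.-1)%N ->
      (1 < `|(i%:Z - j%:Z)%R|)%N ->
      is_rel n [:: L (Sg i); L (Sg j)] [:: L (Sg j); L (Sg i)]
  | rel_near i j : (1 <= i <= n.-1)%N -> (1 <= j <= n.-1)%N ->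
      `|(i%:Z - j%:Z)%R|%N = 1%N ->
      is_rel n [:: L (Sg i); L (Sg j); L (Sg i)] [:: L (Sg j); L (Sg i); L (Sg j)]
  | rel_act1 i : (1 <= i <= n.-1)%N ->
      is_rel n [:: L (Gg i.+1); L (Sg i)] [:: L (Sg i); L (Gg i)]
  | rel_act2 i : (1 <= i <= n.-1)%N ->
      is_rel n [:: L (Gg i); L (Sg i)]
               [:: L (Sg i); L (Gg i); L (Gg i.+1); Linv (Gg i)]
  | rel_act3 i j : (1 <= i <= n.-1)%N -> (1 <= j <= n)%N ->
      j != i -> j != i.+1 ->
      is_rel n [:: L (Gg j); L (Sg i)] [:: L (Sg i); L (Gg j)].

Definition eval_word (f : gen -> C) (w : word) : C :=
  \prod_(l <- w) (if l.2 then (f l.1)^-1 else f l.1).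

(** A one-dimensional representation rho : F_n ⋊ B_n -> C^*, given (as for
    any homomorphism out of a group presentation) by its values on the
    generators: nonzero values satisfying all defining relations. *)
Definition onedim_rep (n : nat) (f : gen -> C) : Prop :=
  (forall x, valid_gen n x -> f x != 0) /\
  (forall u v, is_rel n u v -> eval_word f u = eval_word f v).

(** Elements of the group ring Z[F_n ⋊ B_n], written as formal finite
    Z-linear combinations of group elements (words). *)
Definition gring := seq (int * word).

Definition rho_ring (f : gen -> C) (a : gring) : C :=
  \sum_(p <- a) (p.1)%:~R * eval_word f p.2.

Definition lmul_sigma (i : nat) (a : gring) : gring :=
  [seq (p.1, L (Sg i) :: p.2) | p <- a].

Definition gr0 : gring := [::].
Definition gr1 : gring := [:: ((1 : int), [::])].
Definition gr_g (i : nat) : gring := [:: ((1 : int), [:: L (Gg i)])].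
Definition gr_1_minus_g (i : nat) : gring :=
  [:: ((1 : int), [::]); ((-1 : int), [:: L (Gg i)])].

(** diag(I_{i-1}, R_i, I_{n-i-1}) with R_i = [[0, g_i], [1, 1 - g_i]];
    rows/columns are 0-based, so R_i sits in rows/columns i-1, i. *)
Definition diagR (n i : nat) : 'M[gring]_n :=
  \matrix_(j < n, k < n)
    if (j == i.-1 :> nat) && (k == i.-1 :> nat) then gr0
    else if (j == i.-1 :> nat) && (k == i :> nat) then gr_g i
    else if (j == i :> nat) && (k == i.-1 :> nat) then gr1
    else if (j == i :> nat) && (k == i :> nat) then gr_1_minus_g i
    else if (j == k :> nat) then gr1 else gr0.

Definition phi_sigma (n i : nat) : 'M[gring]_n :=
  map_mx (lmul_sigma i) (diagR n i).

Definition rho_plus_sigma (n : nat) (f : gen -> C) (i : nat) : 'M[C]_n :=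
  map_mx (rho_ring f) (phi_sigma n i).

Definition burau_block (n i : nat) (t : C) : 'M[C]_n :=
  \matrix_(j < n, k < n)
    if (j == i.-1 :> nat) && (k == i.-1 :> nat) then 0
    else if (j == i.-1 :> nat) && (k == i :> nat) then t
    else if (j == i :> nat) && (k == i.-1 :> nat) then 1
    else if (j == i :> nat) && (k == i :> nat) then 1 - t
    else if (j == k :> nat) then 1 else 0.

(* Main.v *)
Require Import Defs.
From HB Require Import structures.
From mathcomp Require Import all_boot all_order all_algebra.
From mathcomp Require Import complex.
From mathcomp Require Import Rstruct.
Import GRing.Theory.
Local Open Scope ring_scope.

Lemma rho_lmul f i a : rho_ring f (lmul_sigma i a) = f (Sg i) * rho_ring f a.
Proof.
elim: a => [|p a IH]; rewrite /rho_ring /lmul_sigma /= ?big_nil ?mulr0 //.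
rewrite !big_cons -/(rho_ring f a) -/(lmul_sigma i a) -/(rho_ring f _) IH.
rewrite /eval_word big_cons /= mulrDr; congr (_ + _).
by rewrite mulrCA.
Qed.

Lemma dist_succ i : `|(i%:Z - (i.+1)%:Z)%R|%N = 1%N.
Proof. by rewrite -addn1 PoszD opprD addrA subrr add0r. Qed.

Theorem proposition2p1 (n : nat) (f : gen -> C) :
  (2 <= n)%N -> onedim_rep n f ->
  exists s t : C,
    [/\ s != 0, t != 0,
        (forall i, (1 <= i <= n.-1)%N -> f (Sg i) = s),
        (forall j, (1 <= j <= n)%N -> f (Gg j) = t) &
        (forall i, (1 <= i <= n.-1)%N ->
           rho_plus_sigma n f i = s *: burau_block n i t)].
Proof.
move=> n2 [nz rel].
have hS : forall i, (1 <= i <= n.-1)%N -> f (Sg i) = f (Sg 1).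
  elim=> [//|i IH] /andP[_ hi].
  case: i IH hi => [//|i] IH hi.
  have hi1 : (1 <= i.+1 <= n.-1)%N by apply/andP; split=> //; apply: ltnW.
  have := rel _ _ (rel_near (i:=i.+1) (j:=i.+2) hi1 ltac:(by apply/andP) (dist_succ _)).
  rewrite /eval_word !big_cons big_nil /= !mulr1.
  have a := nz (Sg i.+1) hi1; have b := nz (Sg i.+2) ltac:(by apply/andP).
  rewrite -(IH hi1) => e.
  have : f (Sg i.+1) * f (Sg i.+2) * f (Sg i.+1) = f (Sg i.+1) * f (Sg i.+2) * f (Sg i.+2).
    by rewrite -!mulrA e mulrCA.
  by move/(mulfI (mulf_neq0 a b)).
have hG : forall j, (1 <= j <= n)%N -> f (Gg j) = f (Gg 1).
  elim=> [//|j IH] /andP[_ hj].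
  case: j IH hj => [//|j] IH hj.
  have hj1 : (1 <= j.+1 <= n.-1)%N by apply/andP; split=> //; rewrite -ltnS prednK // ltnW.
  have := rel _ _ (rel_act1 hj1).
  rewrite /eval_word !big_cons big_nil /= !mulr1 => e.
  rewrite -IH; last by apply/andP; split=> //; apply: ltnW.
  by apply: (mulIf (nz (Sg j.+1) hj1)); rewrite e mulrC.
have h1 : (1 <= 1 <= n.-1)%N by rewrite /= -ltnS prednK // ltnW.
exists (f (Sg 1)), (f (Gg 1)); split.
- exact: (nz (Sg 1)).
- by apply: (nz (Gg 1)); apply/andP; split=> //; apply: ltnW.
- exact: hS.
- exact: hG.
move=> i hi.
have hi' : (1 <= i <= n)%N.
  case/andP: hi => a b; apply/andP; split=> //; apply: (leq_trans b); exact: leq_pred.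
apply/matrixP => j k; rewrite !mxE rho_lmul (hS _ hi).
have r0 : rho_ring f gr0 = 0 by rewrite /rho_ring big_nil.
have r1 : rho_ring f gr1 = 1 by rewrite /rho_ring big_cons big_nil /eval_word big_nil mulr1 addr0.
have rg : rho_ring f (gr_g i) = f (Gg 1).
  by rewrite /rho_ring big_cons big_nil /eval_word big_cons big_nil /= mul1r mulr1 addr0 hG.
have rm : rho_ring f (gr_1_minus_g i) = 1 - f (Gg 1).
  rewrite /rho_ring !big_cons big_nil /eval_word big_cons !big_nil /= mul1r mulr1 addr0 hG //.
  by rewrite mulN1r.
case: ifP => _; [by rewrite r0 mulr0|].
case: ifP => _; [by rewrite rg|].
case: ifP => _; [by rewrite r1 mulr1|].
case: ifP => _; [by rewrite rm|].
case: ifP => _; [by rewrite r1 mulr1|].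
by rewrite r0.
Qed.
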